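(* Let $N\ge2$, $\gamma\in(0,1)$, and let $\{(Q_i,\mathcal D_i)\}_{i=1}^M$ be an ID code with deterministic decoders for $\mathrm{NL}_{[N]}$ with error probabilities $\lambda_{i\to j}$ ($i\ne j$) and $\lambda_{i\not\to i}$. Then there exist nonempty sets $\mathcal U_i\subseteq[N]$, $i=1,\dots,M$, such that the ID code $\{(\mathcal U_i,\mathcal D_i)\}_{i=1}^M$ (message $i$ encoded uniformly on $\mathcal U_i$) has error probabilities $\tilde\lambda_{i\to j}\le\lambda_{i\to j}\cdot\frac{(1+2\gamma)N^{\gamma}}{\gamma(1-N^{-\gamma})}$ for all $i\ne j$ and $\tilde\lambda_{i\not\to i}\le\lambda_{i\not\to i}\cdot\frac{(1+2\gamma)N^{\gamma}}{\gamma(1-N^{-\gamma})}$ for all $i$.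
   Context: $\mathrm{NL}_{[N]}$ is the noiseless channel with input and output alphabet $[N]=\{1,\dots,N\}$. An ID code with deterministic decoders for $\mathrm{NL}_{[N]}$ is a family $\{(Q_i,\mathcal D_i)\}_{i=1}^M$ with $Q_i$ a probability distribution on $[N]$ and $\mathcal D_i\subseteq[N]$; its error probabilities are $\lambda_{i\to j}=Q_i(\mathcal D_j)$ for $i\ne j$ and $\lambda_{i\not\to i}=Q_i([N]\setminus\mathcal D_i)$. For nonempty $\mathcal U_i\subseteq[N]$, the code $\{(\mathcal U_i,\mathcal D_i)\}$ denotes the code in which $Q_i$ is the uniform distribution on $\mathcal U_i$. *)

(* Defs.v *)
From mathcomp Require Import all_boot all_order all_algebra.
From mathcomp Require Import reals exp.
Set Implicit Arguments. Unset Strict Implicit. Unset Printing Implicit Defensive.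
Import Order.TTheory GRing.Theory Num.Theory.
Local Open Scope ring_scope.

(* The channel NL_[N] has alphabet [N] = {1..N}, represented as 'I_N. *)

Definition is_distr (R : realType) (T : finType) (Q : T -> R) : Prop :=
  (forall x, 0 <= Q x) /\ \sum_(x : T) Q x = 1.

Definition probS (R : realType) (T : finType) (Q : T -> R) (A : {set T}) : R :=
  \sum_(x in A) Q x.

Definition unif (R : realType) (T : finType) (U : {set T}) : T -> R :=
  fun x => if x \in U then (#|U|%:R)^-1 else 0.

Definition err_cross (R : realType) (N M : nat) (Q : 'I_M -> 'I_N -> R)
  (D : 'I_M -> {set 'I_N}) (i j : 'I_M) : R := probS (Q i) (D j).
Definition err_miss (R : realType) (N M : nat) (Q : 'I_M -> 'I_N -> R)
  (D : 'I_M -> {set 'I_N}) (i : 'I_M) : R := probS (Q i) (~: D i).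

Definition blowup (R : realType) (N : nat) (g : R) : R :=
  (1 + 2 * g) * (N%:R `^ g) / (g * (1 - N%:R `^ (- g))).

(* Main.v *)
Require Import Defs.
From mathcomp Require Import all_boot all_order all_algebra.
From mathcomp Require Import reals exp.
From mathcomp Require Import lra.
Import Order.TTheory GRing.Theory Num.Theory.
Set Implicit Arguments. Unset Strict Implicit.
Local Open Scope ring_scope.

Definition Hn (R : realType) (n : nat) : R := \sum_(i < n) (i.+1%:R)^-1.

Lemma Hn_S (R : realType) n : Hn R n.+1 = Hn R n + (n.+1%:R)^-1.
Proof. by rewrite /Hn big_ord_recr. Qed.

Lemma Hn_le (R : realType) n : (1 <= n)%N -> Hn R n <= 1 + ln (n%:R).
Proof.
elim: n => [//|n IH] _.
case: n IH => [|n] IH.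
  by rewrite Hn_S /Hn big_ord0 ln1 add0r addr0 invr1.
rewrite Hn_S.
have h := IH isT.
have hn : (0 : R) < n.+1%:R by rewrite ltr0n.
have hn2 : (0 : R) < n.+2%:R by rewrite ltr0n.
have e : ln (n.+1%:R : R) = ln (n.+2%:R) + ln (1 + - (n.+2%:R)^-1).
  rewrite -lnM ?posrE //; last first.
    rewrite subr_gt0 invf_lt1 // ltr1n //.
  congr ln; rewrite mulrDr mulr1 mulrN divff ?gt_eqF //.
  by rewrite -[n.+2]addn1 natrD addrK.
have l : ln (1 + - (n.+2%:R : R)^-1) <= - (n.+2%:R)^-1.
  apply: le_ln1Dx; rewrite ltrN2 invf_lt1 // ltr1n //.
apply: (le_trans (lerD h (lexx _))).
rewrite e; move: l; set c := (n.+2%:R)^-1; set b := ln (1 - c); set a := ln _; lra.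
Qed.

Lemma exmin (R : realType) (T : finType) (Q : T -> R) (S : {set T}) :
  S != set0 -> exists2 x, x \in S & forall y, y \in S -> Q x <= Q y.
Proof.
case/set0Pn => i0 Hi0.
case: (arg_minP (P := fun x => x \in S) Q Hi0) => x Hx Hm.
by exists x.
Qed.

Definition kk (R : realType) (T : finType) (Q : T -> R) (S : {set T}) x :=
  #|[set y in S | Q x <= Q y]|.

Lemma sum_le_H (R : realType) (T : finType) (Q : T -> R) (c : R) :
  (forall x, 0 <= Q x) -> forall n (S : {set T}), #|S| = n ->
  (forall x, x \in S -> Q x * (kk Q S x)%:R <= c) ->
  \sum_(x in S) Q x <= c * Hn R n.
Proof.
move=> Q0; elim=> [|n IH] S cS H.
  move/eqP: cS; rewrite cards_eq0 => /eqP ->.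
  by rewrite big_set0 /Hn big_ord0 mulr0.
have : S != set0 by rewrite -card_gt0 cS.
case/(exmin Q) => x0 Sx0 Hmin.
rewrite (bigD1 x0) //= Hn_S mulrDr addrC.
have eS : [set y in S | Q x0 <= Q y] = S.
  by apply/setP => y; rewrite inE; case Sy: (y \in S) => //=; rewrite Hmin.
have h1 : Q x0 <= c * (n.+1%:R)^-1.
  have := H x0 Sx0; rewrite /kk eS cS => h.
  by rewrite ler_pdivlMr ?ltr0n.
apply: lerD h1.
have cS' : #|S :\ x0| = n.
  by move: cS; rewrite (cardsD1 x0) Sx0 add1n => -[].
have -> : \sum_(i in S | i != x0) Q i = \sum_(i in S :\ x0) Q i.
  by apply: eq_bigl => i; rewrite !inE andbC.
apply: IH => // x; rewrite inE => /andP [_ Sx].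
apply: le_trans (H x Sx).
apply: ler_wpM2l => //; rewrite ler_nat /kk.
apply: subset_leq_card; apply/subsetP => y; rewrite !inE.
by case/andP => /andP [_ ->] ->.
Qed.

Lemma H_lt_blowup (R : realType) (N : nat) (g : R) :
  (2 <= N)%N -> 0 < g < 1 -> Hn R N < blowup N g.
Proof.
move=> N2 /andP [g0 g1].
have N0 : (0 : R) < N%:R by rewrite ltr0n; case: N N2.
have N1 : (1 : R) < N%:R by rewrite ltr1n.
have L0 : 0 < ln (N%:R : R) by apply: ln_gt0.
have hH := Hn_le R (ltnW N2).
rewrite /blowup powRN.
set P := N%:R `^ g.
have hP : 1 + g * ln (N%:R : R) <= P.
  rewrite /P /powR gt_eqF //; exact: expR_ge1Dx.
have P1 : 1 < P.
  apply: lt_le_trans hP; rewrite ltrDl; exact: mulr_gt0.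
have P0 : 0 < P by apply: lt_trans P1.
have q0 : 0 < P^-1 by rewrite invr_gt0.
have q1 : P^-1 < 1 by rewrite invf_lt1.
set q := P^-1 in q0 q1 *.
have d0 : 0 < g * (1 - q) by apply: mulr_gt0 => //; rewrite subr_gt0.
rewrite ltr_pdivlMr //.
set L := ln _ in L0 hH hP.
have s1 : Hn R N * (g * (1 - q)) <= (1 + L) * (g * (1 - q)).
  by apply: ler_wpM2r => //; apply: ltW.
have s2 : (1 + L) * (g * (1 - q)) <= (1 + L) * g.
  apply: ler_wpM2l; first lra.
  rewrite ler_piMr //; lra.
have s3 : P <= (1 + 2 * g) * P by rewrite ler_peMl; lra.
move: s1 s2 s3 hP; set X := Hn R N * _; set Y := (1 + L) * (g * _).
set Z := (1 + 2 * g) * P.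
have -> : (1 + L) * g = g + g * L by rewrite mulrDl mul1r mulrC.
set W := g * L.
lra.
Qed.

Lemma Hn_ge0 (R : realType) n : 0 <= Hn R n.
Proof. by apply: sumr_ge0 => i _; rewrite invr_ge0. Qed.

Lemma one_U (R : realType) (N : nat) (g : R) (Q : 'I_N -> R) :
  (2 <= N)%N -> 0 < g < 1 -> is_distr Q ->
  exists U : {set 'I_N}, U != set0 /\ forall x, unif R U x <= Q x * blowup N g.
Proof.
move=> N2 gg [Q0 Q1].
have HB := H_lt_blowup N2 gg.
set B := blowup N g in HB *.
have B0 : 0 < B by apply: le_lt_trans HB; apply: Hn_ge0.
case: (boolP [exists x, B^-1 <= Q x * (kk Q setT x)%:R]); last first.
  rewrite negb_exists => /forallP Hall.
  have := @sum_le_H R _ Q B^-1 Q0 N setT.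
  rewrite cardsT card_ord => /(_ erefl) h.
  have : \sum_(x in [set: 'I_N]) Q x <= B^-1 * Hn R N.
    apply: h => x _; move: (Hall x); rewrite -ltNge => /ltW //.
  have -> : \sum_(x in [set: 'I_N]) Q x = 1.
    by rewrite -Q1; apply: eq_bigl => x; rewrite inE.
  rewrite mulrC ler_pdivlMr // mul1r => /(lt_le_trans HB).
  by rewrite ltxx.
case/existsP => x0 hx0.
exists [set y in setT | Q x0 <= Q y].
have U0 : x0 \in [set y in setT | Q x0 <= Q y] by rewrite !inE lexx.
split; first by apply/set0Pn; exists x0.
move=> x; rewrite /unif.
case: ifP => Ux; last by apply: mulr_ge0 => //; apply: ltW.
have Qx : Q x0 <= Q x by move: Ux; rewrite !inE.
set k := #|_| in hx0 *.
have k0 : (0 : R) < k%:R by rewrite ltr0n /k; apply/card_gt0P; exists x0.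
apply: (@le_trans _ _ (Q x0 * B)); last by apply: ler_wpM2r => //; apply: ltW.
have hk : B^-1 <= Q x0 * k%:R by exact: hx0.
have Bn : B != 0 by rewrite gt_eqF.
have h2 : 1 <= B * (Q x0 * k%:R).
  rewrite -{1}(divff Bn); apply: ler_wpM2l => //; exact: ltW.
rewrite -[k%:R^-1]mul1r ler_pdivrMr //.
by move: h2; rewrite mulrA [B * Q x0]mulrC.
Qed.

Unset Implicit Arguments.
Set Strict Implicit.

Theorem lemma3 (R : realType) (N M : nat) (g : R)
  (Q : 'I_M -> 'I_N -> R) (D : 'I_M -> {set 'I_N}) :
  (2 <= N)%N -> 0 < g < 1 ->
  (forall i, is_distr (Q i)) ->
  exists U : 'I_M -> {set 'I_N},
    (forall i, U i != set0) /\
    (forall i j, i != j ->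
       err_cross (fun k => unif R (U k)) D i j <= err_cross Q D i j * blowup N g) /\
    (forall i,
       err_miss (fun k => unif R (U k)) D i <= err_miss Q D i * blowup N g).
Proof.
move=> N2 gg HQ.
have [U HU] := fin_all_exists (fun i => one_U N2 gg (HQ i)).
have key : forall i (A : {set 'I_N}),
    probS (unif R (U i)) A <= probS (Q i) A * blowup N g.
  move=> i A; rewrite /probS big_distrl /=.
  by apply: ler_sum => x _; case: (HU i) => _ ->.
exists U; split; first by move=> i; case: (HU i).
split; last by move=> i; exact: key.
by move=> i j _; exact: key.
Qed.
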